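(* Let $\mathcal{D}=(\mathcal{P},\mathcal{B},\mathcal{I})$ be a $(v,b,r,k,\lambda_1,0)$ SPBIBD of type $(k-1,t)$ with $0<t<k$, and let $\Gamma$ be its incidence graph. Then every vertex $p\in\mathcal{P}$ has eccentricity $4$ in $\Gamma$.
   Context: A design $\mathcal{D}=(\mathcal{P},\mathcal{B},\mathcal{I})$ is an incidence structure with $|\mathcal{P}|=v$, $|\mathcal{B}|=b$, every block incident with exactly $k$ points and every point with exactly $r$ blocks; standing assumptions: $v>k$ and $r<b$. $(p,B)$ is a flag if $p\in B$, a non-flag otherwise. $\mathcal{D}$ is a $(v,b,r,k,\lambda_1,\lambda_2)$ SPBIBD of type $(s,t)$ if (i) any two distinct points are together in exactly $\lambda_1$ or exactly $\lambda_2$ blocks; (ii) for every flag $(p,B)$, the number of points of $B$ other than $p$ lying with $p$ in exactly $\lambda_1$ blocks is $s$; (iii) for every non-flag $(p,B)$, the number of points of $B$ lying with $p$ in exactly $\lambda_1$ blocks is $t$. The incidence graph is the bipartite graph on $\mathcal{P}\cup\mathcal{B}$ with $p\sim B$ iff $p\in B$. The eccentricity of a vertex $u$ is $\max_w\partial(u,w)$, where $\partial$ is graph distance. *)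

(* Defs.v *)
From mathcomp Require Import all_boot.
Set Implicit Arguments. Unset Strict Implicit. Unset Printing Implicit Defensive.

Section Design.
Variables (P B : finType) (I : P -> B -> bool).

Definition block_pts (X : B) : {set P} := [set p | I p X].
Definition pt_blocks (p : P) : {set B} := [set X | I p X].

Definition lam (p q : P) : nat := #|[set X | I p X && I q X]|.

Definition is_design (v b r k : nat) : Prop :=
  [/\ #|P| = v /\ #|B| = b,
      (forall X : B, #|block_pts X| = k),
      (forall p : P, #|pt_blocks p| = r),
      (k < v) & (r < b)].

Definition is_SPBIBD (v b r k l1 l2 s t : nat) : Prop :=
  [/\ is_design v b r k,
      (forall p q : P, p != q -> lam p q = l1 \/ lam p q = l2),
      (forall (p : P) (X : B), I p X ->
          #|[set q | [&& q != p, I q X & lam p q == l1]]| = s)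
    & (forall (p : P) (X : B), ~~ I p X ->
          #|[set q | I q X && (lam p q == l1)]| = t)].

Definition inc_adj : rel (P + B)%type := fun x y =>
  match x, y with
  | inl p, inr X => I p X
  | inr X, inl p => I p X
  | _, _ => false
  end.

End Design.

Section Graph.
Variables (T : finType) (e : rel T).

Definition gdist_is (u w : T) (n : nat) : Prop :=
  (exists s : seq T, [/\ path e u s, last u s = w & size s = n]) /\
  (forall s : seq T, path e u s -> last u s = w -> n <= size s).

(** eccentricity of u equals n: every vertex is at finite distance <= n,
    and some vertex is at distance exactly n (so n is the max distance;
    if some vertex is unreachable the eccentricity is infinite and this fails) *)
Definition eccentricity_is (u : T) (n : nat) : Prop :=
  (forall w : T, exists2 d, gdist_is u w d & d <= n) /\
  (exists w : T, gdist_is u w n).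
End Graph.

(* Main.v *)
Require Import Defs.
From mathcomp Require Import all_boot.
Set Implicit Arguments. Unset Strict Implicit. Unset Printing Implicit Defensive.

Section S.
Variables (P B : finType) (I : P -> B -> bool).

Lemma walk_small (p : P) (s : seq (P + B)) :
  path (inc_adj I) (inl p) s -> size s < 4 ->
  [\/ s = [::], (exists X, s = [:: inr X] /\ I p X),
      (exists X q, s = [:: inr X; inl q] /\ I p X /\ I q X) |
      (exists X q Y, s = [:: inr X; inl q; inr Y] /\ [/\ I p X, I q X & I q Y])].
Proof.
case: s => [|[a|X] [|[b|q] [|[c|Y] [|d s]]]] //=; rewrite ?andbT ?andbF //.
- by move=> _ _; apply: Or41.
- by move=> h _; apply: Or42; eexists.
- by move=> /andP[??] _; apply: Or43; do 2 eexists.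
- by move=> /and3P[???] _; apply: Or44; do 3 eexists.
Qed.



Lemma d0 p : gdist_is (inc_adj I) (inl p) (inl p) 0.
Proof. split; first by exists [::]. by []. Qed.

Lemma d1 p X : I p X -> gdist_is (inc_adj I) (inl p) (inr X) 1.
Proof. move=> h; split; first by exists [:: inr X]; rewrite /= h. move=> s hp hl; rewrite leqNgt; apply/negP; move=> hs;
  have W := @walk_small _ _ hp (@leq_trans _ _ 4 hs isT); move: W hl hs;

  move=> [->|[X' [-> hx]]|[X' [q'' [-> [hx hq]]]]|[X' [q'' [Y' [-> [hx hq hy]]]]]] //=. Qed.

Lemma d2 p q X : q != p -> I p X -> I q X -> gdist_is (inc_adj I) (inl p) (inl q) 2.
Proof.
move=> nqp h1 h2; split; first by exists [:: inr X; inl q]; rewrite /= h1 h2.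
move=> s hp hl; rewrite leqNgt; apply/negP; move=> hs;
  have W := @walk_small _ _ hp (@leq_trans _ _ 4 hs isT); move: W hl hs;

  move=> [->|[X' [-> hx]]|[X' [q'' [-> [hx hq]]]]|[X' [q'' [Y' [-> [hx hq hy]]]]]] //=. by case=> e; rewrite e eqxx in nqp.
Qed.

Lemma d3 p q X Y : ~~ I p X -> I p Y -> I q Y -> I q X ->
  gdist_is (inc_adj I) (inl p) (inr X) 3.
Proof.
move=> nx h1 h2 h3; split; first by exists [:: inr Y; inl q; inr X]; rewrite /= h1 h2 h3.
move=> s hp hl; rewrite leqNgt; apply/negP; move=> hs;
  have W := @walk_small _ _ hp (@leq_trans _ _ 4 hs isT); move: W hl hs;

  move=> [->|[X' [-> hx]]|[X' [q'' [-> [hx hq]]]]|[X' [q'' [Y' [-> [hx hq hy]]]]]] //=. by case=> e _; subst; rewrite hx in nx.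
Qed.

Lemma d4 p q q' X Y : q != p -> ~~ [exists Z, I p Z && I q Z] ->
  ~~ I p X -> I p Y -> I q' Y -> I q' X -> I q X ->
  gdist_is (inc_adj I) (inl p) (inl q) 4.
Proof.
move=> nqp nex nx h1 h2 h3 h4; split.
  by exists [:: inr Y; inl q'; inr X; inl q]; rewrite /= h1 h2 h3 h4.
move=> s hp hl; rewrite leqNgt; apply/negP; move=> hs;
  have W := @walk_small _ _ hp (@leq_trans _ _ 4 hs isT); move: W hl hs;

  move=> [->|[X' [-> hx]]|[X' [q'' [-> [hx hq]]]]|[X' [q'' [Y' [-> [hx hq hy]]]]]] //=.
all: try by case=> e; rewrite e eqxx in nqp.
case=> e _; subst; case/negP: nex; apply/existsP; exists X'; by rewrite hx hq.
Qed.
End S.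

Theorem lemma4p1 (P B : finType) (I : P -> B -> bool)
    (v b r k l1 t : nat) :
  is_SPBIBD I v b r k l1 0 k.-1 t ->
  0 < t < k ->
  forall p : P, eccentricity_is (inc_adj I) (inl p) 4.
Proof.
move=> [[[hv hb] hk hr hkv hrb] hlam hflag hnon] /andP[t0 tk] p.
have /card_gt0P [X0 _] : 0 < #|B| by rewrite hb; apply: leq_ltn_trans hrb.
have /card_gt0P [q0] : 0 < #|block_pts I X0| by rewrite hk; apply: leq_ltn_trans tk.
rewrite inE => hq0.
have r0 : 0 < r by rewrite -(hr q0); apply/card_gt0P; exists X0; rewrite inE.
have inb q : exists X, I q X.
  have /card_gt0P [X] : 0 < #|pt_blocks I q| by rewrite hr.
  by rewrite inE; exists X.
have [Yp hYp] := inb p.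
have l0 : 0 < l1.
  have /card_gt0P [q'] : 0 < #|[set q | [&& q != p, I q Yp & lam I p q == l1]]|.
    by rewrite hflag // -subn1 subn_gt0 (leq_ltn_trans t0 tk).
  rewrite inE => /and3P[_ hq' /eqP <-].
  by apply/card_gt0P; exists Yp; rewrite inE hYp hq'.
have col q : lam I p q = l1 -> exists Y, I p Y && I q Y.
  move=> e; have /card_gt0P [Y] : 0 < lam I p q by rewrite e.
  by rewrite inE; exists Y.
have nocol q : q != p -> lam I p q != l1 -> ~~ [exists Y, I p Y && I q Y].
  move=> nqp nl; apply/existsP => [[Y hY]].
  have : 0 < lam I p q by apply/card_gt0P; exists Y; rewrite inE.
  by case: (hlam p q); [rewrite eq_sym|move/eqP: nl|move ->].
have dist3 X : ~~ I p X -> gdist_is (inc_adj I) (inl p) (inr X) 3.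
  move=> nX.
  have /card_gt0P [q] : 0 < #|[set q | I q X && (lam I p q == l1)]| by rewrite hnon.
  rewrite inE => /andP[hqX /eqP /col [Y /andP[hY1 hY2]]].
  exact: (d3 nX hY1 hY2 hqX).
have dist4 q : q != p -> ~~ [exists Y, I p Y && I q Y] ->
    gdist_is (inc_adj I) (inl p) (inl q) 4.
  move=> nqp nex.
  have [X hX] := inb q.
  have nX : ~~ I p X.
    by apply/negP => hpX; case/negP: nex; apply/existsP; exists X; rewrite hpX.
  have /card_gt0P [q'] : 0 < #|[set q | I q X && (lam I p q == l1)]| by rewrite hnon.
  rewrite inE => /andP[hqX /eqP /col [Y /andP[hY1 hY2]]].
  exact: (d4 nqp nex nX hY1 hY2 hqX hX).
split.
  case=> [q|X].
    have [->|nqp] := eqVneq q p; first by exists 0 => //; apply: d0.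
    case: (boolP [exists Y, I p Y && I q Y]) => [/existsP [Y /andP[h1 h2]]|nex].
      by exists 2 => //; apply: (d2 nqp h1 h2).
    by exists 4 => //; apply: dist4.
  case: (boolP (I p X)) => hX; first by exists 1 => //; apply: d1.
  by exists 3 => //; apply: dist3.
have [X _ nX] : exists2 X, X \in [set: B] & X \notin pt_blocks I p.
  apply/subsetPn; apply/negP => sub.
  have := subset_leq_card sub; rewrite cardsT hr hb.
  by rewrite leqNgt hrb.
rewrite inE in nX.
have [q hq] : exists q, q \in block_pts I X :\: [set q | I q X && (lam I p q == l1)].
  apply/set0Pn; rewrite -card_gt0 cardsD.
  have -> : block_pts I X :&: [set q | I q X && (lam I p q == l1)] =
            [set q | I q X && (lam I p q == l1)].
    by apply/setIidPr/subsetP => q; rewrite !inE => /andP[].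
  by rewrite hk hnon // subn_gt0.
move: hq; rewrite !inE => /andP[hn hqX].
rewrite hqX /= in hn.
have nqp : q != p by apply: contraNneq nX => <-.
exists (inl q); exact: dist4 nqp (nocol q nqp hn).
Qed.
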